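(* Let $(X,\Sigma,\mu)$ be a $\sigma$-finite measure space, $n\ge1$, $b\in\mathbb{C}^n\setminus\{0\}$, $h\in L^\infty(X,\mu;\mathbb{C})$, and define $q:L^2(X,\mu;\mathbb{C}^n)\to\mathbb{C}^n$ by $q(F)=\int_X h(x)\langle b,f_x\rangle f_x\,d\mu(x)$. Suppose $\Phi\in q^{-1}(\{0\})$ is a continuous frame. Then, with $S_\Phi=q^{-1}(\{0\})\cap\big(q^{-1}(\{0\})-\Phi\big)$, the set $\mathcal{F}^{\mathbb{C}}_{(X,\mu),n}\cap S_\Phi$ is dense in $S_\Phi$ (for the norm of $L^2(X,\mu;\mathbb{C}^n)$).
   Context: The inner product on $\mathbb{C}^n$ is $\langle u,v\rangle=\sum_k u^k\overline{v^k}$. $q^{-1}(\{0\})-\Phi=\{G-\Phi: q(G)=0\}$. A family $\Phi=(\varphi_x)_{x\in X}$ in $\mathbb{C}^n$ (with measurable coordinates) is a continuous frame indexed by $(X,\mu)$ if there are $0<A\le B$ with $A\|v\|^2\le\int_X|\langle v,\varphi_x\rangle|^2d\mu(x)\le B\|v\|^2$ for all $v\in\mathbb{C}^n$. $\mathcal{F}^{\mathbb{C}}_{(X,\mu),n}$ denotes the set of such frames, viewed as a subset of $L^2(X,\mu;\mathbb{C}^n)$ (equivalently, the elements of $L^2(X,\mu;\mathbb{C}^n)$ whose coordinate functions are linearly independent in $L^2(X,\mu;\mathbb{C})$). *)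

(* Defs.v *)
From mathcomp Require Import all_boot all_order all_algebra.
From mathcomp.real_closed Require Export complex.
From mathcomp Require Import all_classical all_reals all_analysis.
Set Implicit Arguments. Unset Strict Implicit. Unset Printing Implicit Defensive.
Import Order.TTheory GRing.Theory Num.Theory.
Local Open Scope ring_scope.
Local Open Scope classical_set_scope.

Section Defs.
Context {d : measure_display} {X : measurableType d} {R : realType}.
Variable mu : {measure set X -> \bar R}.
Variable n : nat.

Definition csqnorm (z : R[i]) : R := complex.Re z ^+ 2 + complex.Im z ^+ 2.

Definition cinner (u v : 'I_n -> R[i]) : R[i] := \sum_(k < n) u k * (v k)^*%C.

Definition vsqnorm (v : 'I_n -> R[i]) : R := \sum_(k < n) csqnorm (v k).

Definition cmeasurable (f : X -> R[i]) : Prop :=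
  measurable_fun setT (fun x => complex.Re (f x)) /\
  measurable_fun setT (fun x => complex.Im (f x)).

Definition cintegral (f : X -> R[i]) : R[i] :=
  Complex (Rintegral mu setT (fun x => complex.Re (f x)))
          (Rintegral mu setT (fun x => complex.Im (f x))).

Definition Linfty (h : X -> R[i]) : Prop :=
  cmeasurable h /\ exists M : R, {ae mu, forall x, csqnorm (h x) <= M}.

Definition L2 (F : X -> 'I_n -> R[i]) : Prop :=
  (forall k, cmeasurable (fun x => F x k)) /\
  (\int[mu]_x (vsqnorm (F x))%:E < +oo)%E.

Definition qmap (h : X -> R[i]) (b : 'I_n -> R[i]) (F : X -> 'I_n -> R[i])
  : 'I_n -> R[i] :=
  fun k => cintegral (fun x => h x * cinner b (F x) * F x k).

Definition cont_frame (Phi : X -> 'I_n -> R[i]) : Prop :=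
  L2 Phi /\
  exists A B : R, 0 < A /\ A <= B /\
    forall v : 'I_n -> R[i],
      ((A * vsqnorm v)%:E <= \int[mu]_x (csqnorm (cinner v (Phi x)))%:E)%E /\
      (\int[mu]_x (csqnorm (cinner v (Phi x)))%:E <= (B * vsqnorm v)%:E)%E.

Definition L2sqdist (F G : X -> 'I_n -> R[i]) : \bar R :=
  (\int[mu]_x (vsqnorm (fun k => F x k - G x k))%:E)%E.

Definition qzero (h : X -> R[i]) (b : 'I_n -> R[i]) : set (X -> 'I_n -> R[i]) :=
  [set G | L2 G /\ qmap h b G = (fun=> 0)].

Definition qzero_shift (h : X -> R[i]) (b : 'I_n -> R[i])
  (Phi : X -> 'I_n -> R[i]) : set (X -> 'I_n -> R[i]) :=
  [set H | exists2 G, qzero h b G & H = (fun x k => G x k - Phi x k)].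

Definition S_Phi h b Phi := qzero h b `&` qzero_shift h b Phi.

End Defs.

(* Main.v *)
Require Import Defs.
From mathcomp Require Import all_boot all_order all_algebra.
From mathcomp.real_closed Require Import complex.
From mathcomp Require Import all_classical all_reals all_analysis.
From mathcomp Require Import measurable_realfun.
From mathcomp Require Import ring lra.
Import Order.TTheory GRing.Theory Num.Theory.
Local Open Scope ring_scope.
Local Open Scope classical_set_scope.

Section CAlg.
Context {R : realType}.
Implicit Types z w : R[i].

Lemma ReM z w : complex.Re (z * w) = complex.Re z * complex.Re w - complex.Im z * complex.Im w.
Proof. by case: z => a b; case: w => c e; rewrite /GRing.mul /GRing.add /=. Qed.
Lemma ImM z w : complex.Im (z * w) = complex.Re z * complex.Im w + complex.Im z * complex.Re w.
Proof. by case: z => a b; case: w => c e; rewrite /GRing.mul /GRing.add /=. Qed.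
Lemma ReD z w : complex.Re (z + w) = complex.Re z + complex.Re w.
Proof. by case: z => a b; case: w => c e; rewrite /GRing.mul /GRing.add /=. Qed.
Lemma ImD z w : complex.Im (z + w) = complex.Im z + complex.Im w.
Proof. by case: z => a b; case: w => c e; rewrite /GRing.mul /GRing.add /=. Qed.
Lemma ReC z : complex.Re (z^*)%C = complex.Re z. Proof. by case: z. Qed.
Lemma ImC z : complex.Im (z^*)%C = - complex.Im z. Proof. by case: z. Qed.
Lemma Rer (r : R) : complex.Re (r%:C)%C = r. Proof. by []. Qed.
Lemma Imr (r : R) : complex.Im (r%:C)%C = 0. Proof. by []. Qed.
Lemma Re0 : complex.Re (0 : R[i]) = 0. Proof. by []. Qed.
Lemma Im0 : complex.Im (0 : R[i]) = 0. Proof. by []. Qed.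
Lemma ReN z : complex.Re (- z) = - complex.Re z. Proof. by case: z. Qed.
Lemma ImN z : complex.Im (- z) = - complex.Im z. Proof. by case: z. Qed.

Lemma ceqP' z w : complex.Re z = complex.Re w -> complex.Im z = complex.Im w -> z = w.
Proof. by case: z => a b; case: w => c e /= -> ->. Qed.
Lemma conjD z w : ((z + w)^*)%C = (z^*)%C + (w^*)%C.
Proof. by apply: ceqP'; rewrite ?ReD ?ImD ?ReC ?ImC ?ReD ?ImD // opprD. Qed.
Lemma conjM z w : ((z * w)^*)%C = (z^*)%C * (w^*)%C.
Proof. by apply: ceqP'; rewrite ?ReM ?ImM ?ReC ?ImC ?ReM ?ImM //; ring. Qed.

Lemma csqnorm_ge0 z : 0 <= csqnorm z.
Proof. by rewrite /csqnorm addr_ge0 // sqr_ge0. Qed.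
Lemma csqnormM z w : csqnorm (z * w) = csqnorm z * csqnorm w.
Proof. rewrite /csqnorm ReM ImM; ring. Qed.
Lemma csqnormC z : csqnorm (z^*)%C = csqnorm z.
Proof. by rewrite /csqnorm ReC ImC sqrrN. Qed.
Lemma csqnormD z w : csqnorm (z + w) <= 2 * (csqnorm z + csqnorm w).
Proof.
rewrite /csqnorm ReD ImD.
have := sqr_ge0 (complex.Re z - complex.Re w).
have := sqr_ge0 (complex.Im z - complex.Im w).
nra.
Qed.
Lemma Re_sq_le z : complex.Re z ^+ 2 <= csqnorm z.
Proof. rewrite /csqnorm; nra. Qed.
Lemma Im_sq_le z : complex.Im z ^+ 2 <= csqnorm z.
Proof. rewrite /csqnorm; nra. Qed.

Lemma csq_le_vsq n (v : 'I_n -> R[i]) k : csqnorm (v k) <= vsqnorm v.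
Proof.
rewrite /vsqnorm (bigD1 k) //= lerDl.
by apply: sumr_ge0 => j _; exact: csqnorm_ge0.
Qed.
Lemma vsqnorm_ge0 n (v : 'I_n -> R[i]) : 0 <= vsqnorm v.
Proof. by apply: sumr_ge0 => j _; exact: csqnorm_ge0. Qed.

Lemma csqnorm_sum m (F : 'I_m -> R[i]) :
  csqnorm (\sum_(k < m) F k) <= 2 ^+ m * \sum_(k < m) csqnorm (F k).
Proof.
elim: m F => [|m ih] F.
  by rewrite !big_ord0 mulr0 /csqnorm /= expr0n /= addr0.
rewrite !big_ord_recr /=.
apply: (le_trans (csqnormD _ _)).
have h1 := ih (fun k => F (widen_ord (leqnSn m) k)).
have h2 : 0 <= csqnorm (F ord_max) := csqnorm_ge0 _.
have h3 : 0 <= \sum_(k < m) csqnorm (F (widen_ord (leqnSn m) k)).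
  by apply: sumr_ge0 => j _; exact: csqnorm_ge0.
have h4 : 1 <= 2 ^+ m :> R by rewrite exprn_ege1 // ler1n.
rewrite exprS; nra.
Qed.

Lemma cinner_bound n (v w : 'I_n -> R[i]) :
  csqnorm (cinner v w) <= 2 ^+ n * (vsqnorm v * vsqnorm w).
Proof.
rewrite /cinner; apply: le_trans; first exact: csqnorm_sum.
rewrite ler_pM2l ?exprn_gt0 // /vsqnorm mulr_suml.
apply: ler_sum => k _ /=; rewrite csqnormM csqnormC.
by rewrite ler_wpM2l ?csqnorm_ge0 // csq_le_vsq.
Qed.
Lemma amgm_t (t r A B : R) : 0 < t -> 0 <= A -> 0 <= B -> r ^+ 2 <= A * B ->
  2 * t * `|r| <= t ^+ 2 * A + B.
Proof.
move=> t0 A0 B0 hr.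
have s0 := normr_ge0 r.
have hs : `|r| ^+ 2 <= A * B by rewrite real_normK ?num_real.
have h1 := sqr_ge0 (t ^+ 2 * A - B).
rewrite leNgt; apply/negP => hlt.
have h2 : 0 <= t ^+ 2 * A + B by have := sqr_ge0 t; nra.
nra.
Qed.

Lemma cs_alg (I Qf Qg : R) : 0 <= I -> 0 <= Qf -> 0 <= Qg ->
  (forall t, 0 < t -> 2 * t * I <= t ^+ 2 * Qf + Qg) -> I ^+ 2 <= Qf * Qg.
Proof.
move=> I0 f0 g0 H.
have [->|Ipos] := eqVneq I 0; first by rewrite expr0n /= mulr_ge0.
have Ip : 0 < I by rewrite lt0r Ipos.
have [Qf0|Qfp] := eqVneq Qf 0.
  have tp : 0 < (Qg + 1) / I by rewrite divr_gt0 //; lra.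
  have := H _ tp; rewrite Qf0 mulr0 add0r.
  have -> : 2 * ((Qg + 1) / I) * I = 2 * (Qg + 1) by field.
  by move=> h; exfalso; lra.
have Qp : 0 < Qf by rewrite lt0r Qfp.
have := H (I / Qf); rewrite divr_gt0 // => /(_ isT).
rewrite expr_div_n.
have -> : I ^+ 2 / Qf ^+ 2 * Qf = I ^+ 2 / Qf by field.
have -> : 2 * (I / Qf) * I = 2 * (I ^+ 2 / Qf) by field.
move=> h.
have h' : I ^+ 2 / Qf <= Qg by lra.
by rewrite -ler_pdivrMl // mulrC.
Qed.

Lemma le_sum1 m (F : 'I_m -> R) k : (forall j, 0 <= F j) -> F k <= \sum_(j < m) F j.
Proof.
move=> F0; rewrite (bigD1 k) //= lerDl; by apply: sumr_ge0 => j _.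
Qed.

Lemma mx_bound n (B : 'M[R[i]]_n) : exists K : R, 0 <= K /\
  forall u : 'rV[R[i]]_n,
    vsqnorm (fun l => (u *m B) 0 l) <= K * vsqnorm (fun k => u 0 k).
Proof.
set S := \sum_(k < n) \sum_(l < n) csqnorm (B k l).
have S0 : 0 <= S by do 2 (apply: sumr_ge0 => ? _); exact: csqnorm_ge0.
have hB : forall k l, csqnorm (B k l) <= S.
  move=> k l.
  apply: (le_trans (le_sum1 _ (fun j => csqnorm (B k j)) l _)).
    by move=> j; exact: csqnorm_ge0.
  apply: (le_sum1 _ (fun k => \sum_(l < n) csqnorm (B k l)) k).
  by move=> j; apply: sumr_ge0 => ? _; exact: csqnorm_ge0.
exists (n%:R * (2 ^+ n * S)); split; first by rewrite !mulr_ge0 // exprn_ge0.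
move=> u; rewrite /vsqnorm.
have hl : forall l, csqnorm ((u *m B) 0 l) <=
    2 ^+ n * S * \sum_(k < n) csqnorm (u 0 k).
  move=> l; rewrite mxE; apply: le_trans; first exact: csqnorm_sum.
  rewrite -mulrA ler_pM2l ?exprn_gt0 // mulr_sumr; apply: ler_sum => k _.
  rewrite csqnormM mulrC; apply: ler_wpM2r; first exact: csqnorm_ge0.
  exact: hB.
apply: le_trans; first by apply: ler_sum => l _; exact: hl.
rewrite sumr_const card_ord -[X in X <= _]mulr_natl !mulrA.
by [].
Qed.


Lemma exists_good n (M P : 'M[R[i]]_n) (s : seq R) : P \in unitmx ->
  uniq s -> size s = n.+1 ->
  exists2 t, t \in s & (M + (t%:C)%C *: P) \in unitmx.
Proof.
move=> hP us ss; apply: contrapT => hn.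
have hall : all (root (char_poly (M *m invmx P))) [seq - (t%:C)%C | t <- s].
  apply/allP => _ /mapP [t ts ->]; rewrite -eigenvalue_root_char.
  apply/eigenvalueP.
  have : (M + (t%:C)%C *: P) \notin unitmx.
    by apply/negP => hu; apply: hn; exists t.
  rewrite unitmxE unitfE negbK => /det0P [r r0 hr].
  exists r => //.
  move: hr; rewrite mulmxDr -scalemxAr => /eqP; rewrite addr_eq0 => /eqP hr.
  by rewrite mulmxA hr mulNmx -scalemxAl mulmxK // scaleNr.
have hu : uniq [seq - (t%:C)%C | t <- s].
  rewrite map_inj_uniq // => a b /oppr_inj; exact: complexI.
have := max_poly_roots (monic_neq0 (char_poly_monic _)) hall hu.
by rewrite size_map size_char_poly ss ltnn.
Qed.

End CAlg.


Section Meas.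
Context {d : measure_display} {X : measurableType d} {R : realType}.
Variable mu : {measure set X -> \bar R}.
Local Notation cRe := complex.Re.
Local Notation cIm := complex.Im.
Implicit Types f g : X -> R[i].

Definition cint (f : X -> R[i]) :=
  mu.-integrable setT (EFin \o (fun x => cRe (f x))) /\
  mu.-integrable setT (EFin \o (fun x => cIm (f x))).
Definition L2c (f : X -> R[i]) :=
  cmeasurable f /\ (\int[mu]_x (csqnorm (f x))%:E < +oo)%E.

Lemma cmeas_add f g : cmeasurable f -> cmeasurable g -> cmeasurable (fun x => f x + g x).
Proof.
move=> [f1 f2] [g1 g2]; split.
- by under eq_fun do rewrite ReD; exact: measurable_funD.
- by under eq_fun do rewrite ImD; exact: measurable_funD.
Qed.
Lemma cmeas_mul f g : cmeasurable f -> cmeasurable g -> cmeasurable (fun x => f x * g x).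
Proof.
move=> [f1 f2] [g1 g2]; split.
- by under eq_fun do rewrite ReM; apply: measurable_funB; exact: measurable_funM.
- by under eq_fun do rewrite ImM; apply: measurable_funD; exact: measurable_funM.
Qed.
Lemma cmeas_conj f : cmeasurable f -> cmeasurable (fun x => (f x)^*%C).
Proof.
move=> [f1 f2]; split.
- by under eq_fun do rewrite ReC.
- by under eq_fun do rewrite ImC; exact: measurableT_comp.
Qed.
Lemma cmeas_cst (c : R[i]) : cmeasurable (fun _ : X => c).
Proof. by split; exact: measurable_cst. Qed.
Lemma cmeas_sum m (F : 'I_m -> X -> R[i]) : (forall k, cmeasurable (F k)) ->
  cmeasurable (fun x => \sum_(k < m) F k x).
Proof.
move=> hF; elim: m F hF => [|m ih] F hF.
  by under eq_fun do rewrite big_ord0; exact: cmeas_cst.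
under eq_fun do rewrite big_ord_recr /=.
apply: cmeas_add; last exact: hF.
exact: (ih (fun k => F (widen_ord (leqnSn m) k))).
Qed.
Lemma cmeas_csq f : cmeasurable f -> measurable_fun setT (fun x => csqnorm (f x)).
Proof.
move=> [f1 f2]; rewrite /csqnorm.
by apply: measurable_funD; apply: measurable_funX.
Qed.

Lemma ge0_fin_integrable (g : X -> R) : measurable_fun setT g ->
  (forall x, 0 <= g x) -> (\int[mu]_x (g x)%:E < +oo)%E ->
  mu.-integrable setT (EFin \o g).
Proof.
move=> mg g0 gfin; apply/integrableP; split; first exact/measurable_EFinP.
apply: le_lt_trans gfin; apply: ge0_le_integral => //.
- have mEg := proj2 (measurable_EFinP setT g) mg.
  exact: (measurableT_comp (@abse_measurable R setT) mEg).
- exact/measurable_EFinP.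
- by move=> x _ /=; rewrite lee_fin ger0_norm.
Qed.

Lemma ceqP (z w : R[i]) : cRe z = cRe w -> cIm z = cIm w -> z = w.
Proof. by case: z => a b; case: w => c e /= -> ->. Qed.

Definition rint (f : X -> R) := mu.-integrable setT (EFin \o f).

Lemma rint_add (f g : X -> R) : rint f -> rint g -> rint (fun x => f x + g x).
Proof.
move=> hf hg; apply: eq_integrable (integrableD _ hf hg) => //.
Qed.
Lemma rint_scale (r : R) (f : X -> R) : rint f -> rint (fun x => r * f x).
Proof.
move=> hf; apply: eq_integrable (integrableZl _ r hf) => //.
Qed.
Lemma rint_opp (f : X -> R) : rint f -> rint (fun x => - f x).
Proof.
by move=> hf; under eq_fun do rewrite -mulN1r; exact: rint_scale.
Qed.
Lemma rint_sub (f g : X -> R) : rint f -> rint g -> rint (fun x => f x - g x).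
Proof. by move=> hf hg; apply: rint_add => //; exact: rint_opp. Qed.
Lemma rint_cst0 : rint (fun=> 0).
Proof. exact: integrable0. Qed.

Lemma cint_add f g : cint f -> cint g -> cint (fun x => f x + g x).
Proof.
move=> [f1 f2] [g1 g2]; split.
- by under eq_fun do rewrite ReD; exact: rint_add.
- by under eq_fun do rewrite ImD; exact: rint_add.
Qed.
Lemma cint_scale (c : R[i]) f : cint f -> cint (fun x => c * f x).
Proof.
move=> [f1 f2]; split.
- by under eq_fun do rewrite ReM; apply: rint_sub; exact: rint_scale.
- by under eq_fun do rewrite ImM; apply: rint_add; exact: rint_scale.
Qed.
Lemma cint0 : cint (fun=> 0).
Proof. by split; exact: rint_cst0. Qed.
Lemma cint_sum m (F : 'I_m -> X -> R[i]) : (forall k, cint (F k)) ->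
  cint (fun x => \sum_(k < m) F k x).
Proof.
move=> hF; elim: m F hF => [|m ih] F hF.
  by under eq_fun do rewrite big_ord0; exact: cint0.
under eq_fun do rewrite big_ord_recr /=.
apply: cint_add; last exact: hF.
exact: (ih (fun k => F (widen_ord (leqnSn m) k))).
Qed.

Lemma cintegral_add f g : cint f -> cint g ->
  cintegral mu (fun x => f x + g x) = cintegral mu f + cintegral mu g.
Proof.
move=> [f1 f2] [g1 g2]; apply: ceqP; rewrite ?ReD ?ImD /=.
- by under eq_Rintegral do rewrite ReD; rewrite RintegralD.
- by under eq_Rintegral do rewrite ImD; rewrite RintegralD.
Qed.
Lemma cintegral_scale (c : R[i]) f : cint f ->
  cintegral mu (fun x => c * f x) = c * cintegral mu f.
Proof.
move=> [f1 f2]; apply: ceqP; rewrite ?ReM ?ImM /=.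
- under eq_Rintegral do rewrite ReM.
  by rewrite RintegralB ?RintegralZl //; exact: rint_scale.
- under eq_Rintegral do rewrite ImM.
  by rewrite RintegralD ?RintegralZl //; exact: rint_scale.
Qed.
Lemma cintegral0 : cintegral mu (fun=> 0) = 0.
Proof. by apply: ceqP; rewrite /= Rintegral_cst // mul0r. Qed.
Lemma cintegral_sum m (F : 'I_m -> X -> R[i]) : (forall k, cint (F k)) ->
  cintegral mu (fun x => \sum_(k < m) F k x) = \sum_(k < m) cintegral mu (F k).
Proof.
move=> hF; elim: m F hF => [|m ih] F hF.
  by under eq_fun do rewrite big_ord0; rewrite big_ord0 cintegral0.
under eq_fun do rewrite big_ord_recr /=.
rewrite cintegral_add; last exact: hF.
  by rewrite big_ord_recr /= (ih (fun k => F (widen_ord (leqnSn m) k))).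
exact: cint_sum.
Qed.

Lemma rint_fin (g : X -> R) : rint g -> (forall x, 0 <= g x) ->
  (\int[mu]_x (g x)%:E < +oo)%E.
Proof.
move=> /integrableP[mg hg] g0; apply: le_lt_trans hg; apply: ge0_le_integral => //.
- by move=> x _; rewrite lee_fin.
- exact: (measurableT_comp (@abse_measurable R setT) mg).
- by move=> x _ /=; rewrite lee_fin ger0_norm.
Qed.

Lemma rint_le (g1 g2 : X -> R) : measurable_fun setT g1 ->
  (forall x, `|g1 x| <= g2 x) -> rint g2 -> rint g1.
Proof.
move=> m1 h12 i2; apply: le_integrable i2 => //; first exact/measurable_EFinP.
move=> x _ /=; rewrite lee_fin; apply: (le_trans (h12 x)).
exact: ler_norm.
Qed.

Lemma rmeas_sum m (F : 'I_m -> X -> R) : (forall k, measurable_fun setT (F k)) ->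
  measurable_fun setT (fun x => \sum_(k < m) F k x).
Proof.
move=> hF; elim: m F hF => [|m ih] F hF.
  by under eq_fun do rewrite big_ord0; exact: measurable_cst.
under eq_fun do rewrite big_ord_recr /=.
apply: measurable_funD; last exact: hF.
exact: (ih (fun k => F (widen_ord (leqnSn m) k))).
Qed.

Lemma L2c_rint f : L2c f -> rint (fun x => csqnorm (f x)).
Proof.
move=> [mf fin]; apply: ge0_fin_integrable => //; first exact: cmeas_csq.
by move=> x; exact: csqnorm_ge0.
Qed.
Lemma rint_L2c f : cmeasurable f -> rint (fun x => csqnorm (f x)) -> L2c f.
Proof.
move=> mf hi; split => //; apply: rint_fin hi _ => x; exact: csqnorm_ge0.
Qed.

Lemma L2c_add f g : L2c f -> L2c g -> L2c (fun x => f x + g x).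
Proof.
move=> hf hg; have [mf _] := hf; have [mg _] := hg.
apply: rint_L2c; first exact: cmeas_add.
apply: (@rint_le _ (fun x => 2 * (csqnorm (f x) + csqnorm (g x)))).
- by apply: cmeas_csq; exact: cmeas_add.
- move=> x; rewrite ger0_norm ?csqnorm_ge0 //; exact: csqnormD.
- by apply: rint_scale; apply: rint_add; exact: L2c_rint.
Qed.
Lemma L2c_scale (c : R[i]) f : L2c f -> L2c (fun x => c * f x).
Proof.
move=> hf; have [mf _] := hf.
apply: rint_L2c; first by apply: cmeas_mul => //; exact: cmeas_cst.
under eq_fun do rewrite csqnormM; apply: rint_scale; exact: L2c_rint.
Qed.
Lemma L2c_conj f : L2c f -> L2c (fun x => (f x)^*%C).
Proof.
move=> hf; have [mf _] := hf.
apply: rint_L2c; first exact: cmeas_conj.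
under eq_fun do rewrite csqnormC; exact: L2c_rint.
Qed.
Lemma L2c0 : L2c (fun=> 0).
Proof.
apply: rint_L2c; first exact: cmeas_cst.
have -> : (fun _ : X => csqnorm (0 : R[i])) = fun=> 0.
  by apply: funext => x; rewrite /csqnorm /= expr0n /= addr0.
exact: rint_cst0.
Qed.
Lemma L2c_sum m (F : 'I_m -> X -> R[i]) : (forall k, L2c (F k)) ->
  L2c (fun x => \sum_(k < m) F k x).
Proof.
move=> hF; elim: m F hF => [|m ih] F hF.
  by under eq_fun do rewrite big_ord0; exact: L2c0.
under eq_fun do rewrite big_ord_recr /=.
apply: L2c_add; last exact: hF.
exact: (ih (fun k => F (widen_ord (leqnSn m) k))).
Qed.

Lemma ReM_bound (z w : R[i]) : `|cRe (z * w)| <= csqnorm z + csqnorm w.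
Proof.
rewrite ReM /csqnorm.
have := sqr_ge0 (cRe z - cRe w); have := sqr_ge0 (cRe z + cRe w).
have := sqr_ge0 (cIm z - cIm w); have := sqr_ge0 (cIm z + cIm w).
rewrite ler_norml; move=> *; apply/andP; split; nra.
Qed.
Lemma ImM_bound (z w : R[i]) : `|cIm (z * w)| <= csqnorm z + csqnorm w.
Proof.
rewrite ImM /csqnorm.
have := sqr_ge0 (cRe z - cIm w); have := sqr_ge0 (cRe z + cIm w).
have := sqr_ge0 (cIm z - cRe w); have := sqr_ge0 (cIm z + cRe w).
rewrite ler_norml; move=> *; apply/andP; split; nra.
Qed.

Lemma L2c_mul f g : L2c f -> L2c g -> cint (fun x => f x * g x).
Proof.
move=> hf hg; have [mf _] := hf; have [mg _] := hg.
have [m1 m2] := cmeas_mul _ _ mf mg.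
have hs : rint (fun x => csqnorm (f x) + csqnorm (g x)).
  by apply: rint_add; exact: L2c_rint.
split.
- by apply: rint_le hs => // x; exact: ReM_bound.
- by apply: rint_le hs => // x; exact: ImM_bound.
Qed.

Lemma rint_ae_le (g1 g2 : X -> R) (N : set X) : measurable N -> mu N = 0 ->
  measurable_fun setT g1 -> rint g2 ->
  (forall x, ~ N x -> `|g1 x| <= g2 x) -> rint g1.
Proof.
move=> mN N0 m1 i2 h12.
have mE1 : measurable_fun setT (EFin \o g1) by exact/measurable_EFinP.
apply/(negligible_integrable mN measurableT mE1 N0).
have i2' : mu.-integrable (setT `\` N) (EFin \o g2).
  apply: integrableS i2 => //; exact: measurableD.
apply: le_integrable i2'.
- exact: measurableD.
- by apply: (measurable_funS measurableT _ mE1).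
- move=> x [_ Nx] /=; rewrite lee_fin; apply: (le_trans (h12 x Nx)).
  exact: ler_norm.
Qed.

Lemma cint_meas f : cint f -> cmeasurable f.
Proof.
move=> [f1 f2]; split; apply/measurable_EFinP.
- exact: (measurable_int mu f1).
- exact: (measurable_int mu f2).
Qed.

Lemma rint_norm (g : X -> R) : rint g -> rint (fun x => `|g x|).
Proof. move=> hg; exact: integrable_norm. Qed.

Lemma abs_le_sq (r : R) : `|r| <= 1 + r ^+ 2.
Proof.
rewrite -real_normK ?num_real //.
have := sqr_ge0 (`|r| - 1); nra.
Qed.

Lemma cint_bounded h f : Linfty mu h -> cint f -> cint (fun x => h x * f x).
Proof.
move=> [mh [M [N [mN N0 HN]]]] hf.
have mf := cint_meas _ hf.
have [m1 m2] := cmeas_mul _ _ mh mf.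
have [f1 f2] := hf.
have hs : rint (fun x => (1 + M) * (`|cRe (f x)| + `|cIm (f x)|)).
  by apply: rint_scale; apply: rint_add; exact: rint_norm.
have key : forall x, ~ N x -> `|cRe (h x)| <= 1 + M /\ `|cIm (h x)| <= 1 + M.
  move=> x Nx.
  have hx : csqnorm (h x) <= M.
    by apply: contra_notP Nx => hx; apply: HN.
  have := abs_le_sq (cRe (h x)); have := abs_le_sq (cIm (h x)).
  have := Re_sq_le (h x); have := Im_sq_le (h x).
  move=> *; split; lra.
split.
- apply: (rint_ae_le _ _ _ mN N0 m1 hs) => x Nx.
  have [k1 k2] := key x Nx; rewrite ReM.
  apply: (le_trans (ler_normB _ _)); rewrite !normrM.
  have := normr_ge0 (cRe (f x)); have := normr_ge0 (cIm (f x)); nra.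
- apply: (rint_ae_le _ _ _ mN N0 m2 hs) => x Nx.
  have [k1 k2] := key x Nx; rewrite ImM.
  apply: (le_trans (ler_normD _ _)); rewrite !normrM.
  have := normr_ge0 (cRe (f x)); have := normr_ge0 (cIm (f x)); nra.
Qed.

Lemma rint_sum m (F : 'I_m -> X -> R) : (forall k, rint (F k)) ->
  rint (fun x => \sum_(k < m) F k x).
Proof.
move=> hF; elim: m F hF => [|m ih] F hF.
  by under eq_fun do rewrite big_ord0; exact: rint_cst0.
under eq_fun do rewrite big_ord_recr /=.
apply: rint_add; last exact: hF.
exact: (ih (fun k => F (widen_ord (leqnSn m) k))).
Qed.


Notation RI g := (Rintegral mu setT g).

Lemma cs_rint (g1 a b : X -> R) : rint g1 -> rint a -> rint b ->
  (forall x, 0 <= a x) -> (forall x, 0 <= b x) ->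
  (forall x, g1 x ^+ 2 <= a x * b x) ->
  (RI g1) ^+ 2 <= RI a * RI b.
Proof.
move=> i1 ia ib a0 b0 hab.
have iI := rint_norm _ i1.
set I := RI (fun x => `|g1 x|).
have le1 : `|RI g1| <= I by exact: le_normr_Rintegral.
have I0 : 0 <= I by apply: Rintegral_ge0 => x _.
apply: (@le_trans _ _ (I ^+ 2)).
  rewrite -real_normK ?num_real //; apply: lerXn2r => //; rewrite ?nnegrE //.
apply: cs_alg => //; first by apply: Rintegral_ge0 => x _; exact: a0.
  by apply: Rintegral_ge0 => x _; exact: b0.
move=> t t0.
have -> : 2 * t * I = RI (fun x => (2 * t) * `|g1 x|) by rewrite RintegralZl.
have -> : t ^+ 2 * RI a + RI b = RI (fun x => t ^+ 2 * a x + b x).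
  by rewrite RintegralD ?RintegralZl //; exact: rint_scale.
apply: le_Rintegral => //.
- exact: rint_scale.
- by apply: rint_add => //; exact: rint_scale.
- by move=> x _; apply: amgm_t => //; exact: hab.
Qed.

Lemma cs_cint f g : L2c f -> L2c g ->
  csqnorm (cintegral mu (fun x => f x * g x)) <=
  2 * (RI (fun x => csqnorm (f x)) * RI (fun x => csqnorm (g x))).
Proof.
move=> hf hg; have [i1 i2] := L2c_mul _ _ hf hg.
have f0 : forall x, 0 <= csqnorm (f x) by move=> x; exact: csqnorm_ge0.
have g0 : forall x, 0 <= csqnorm (g x) by move=> x; exact: csqnorm_ge0.
have h1 : (RI (fun x => cRe (f x * g x))) ^+ 2 <=
    RI (fun x => csqnorm (f x)) * RI (fun x => csqnorm (g x)).
  apply: cs_rint => //; try exact: L2c_rint.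
  by move=> x; rewrite -csqnormM; exact: Re_sq_le.
have h2 : (RI (fun x => cIm (f x * g x))) ^+ 2 <=
    RI (fun x => csqnorm (f x)) * RI (fun x => csqnorm (g x)).
  apply: cs_rint => //; try exact: L2c_rint.
  by move=> x; rewrite -csqnormM; exact: Im_sq_le.
rewrite /csqnorm /cintegral /=; lra.
Qed.


Lemma rint_EFin (g : X -> R) : rint g -> (\int[mu]_x (g x)%:E)%E = (RI g)%:E.
Proof. by move=> hg; rewrite /Rintegral fineK //; exact: integrable_fin_num. Qed.

Section Vec.
Variable n : nat.
Implicit Types F G : X -> 'I_n -> R[i].

Lemma L2_rint F : L2 mu F -> rint (fun x => vsqnorm (F x)).
Proof.
move=> [mF fin]; apply: ge0_fin_integrable => //.
- rewrite /vsqnorm; apply: rmeas_sum => k; exact: cmeas_csq.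
- move=> x; exact: vsqnorm_ge0.
Qed.

Lemma L2_coord F k : L2 mu F -> L2c (fun x => F x k).
Proof.
move=> hF; have [mF _] := hF; apply: rint_L2c => //.
apply: (@rint_le _ (fun x => vsqnorm (F x))); first exact: cmeas_csq.
  2: exact: L2_rint.
move=> x; rewrite ger0_norm ?csqnorm_ge0 //; exact: csq_le_vsq.
Qed.

Lemma L2_of F : (forall k, L2c (fun x => F x k)) -> L2 mu F.
Proof.
move=> hF; split; first by move=> k; have [] := hF k.
apply: rint_fin; last by move=> x; exact: vsqnorm_ge0.
by rewrite /vsqnorm; apply: rint_sum => k; exact: L2c_rint.
Qed.

Lemma L2_comb F G (c : R[i]) : L2 mu F -> L2 mu G ->
  L2 mu (fun x k => F x k + c * G x k).
Proof.
move=> hF hG; apply: L2_of => k; apply: L2c_add; first exact: L2_coord.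
by apply: L2c_scale; exact: L2_coord.
Qed.

Lemma cinner_L2c (v : 'I_n -> R[i]) F : L2 mu F -> L2c (fun x => cinner v (F x)).
Proof.
move=> hF; rewrite /cinner; apply: L2c_sum => k.
by apply: L2c_scale; apply: L2c_conj; exact: L2_coord.
Qed.

Lemma cinner_comb (v u w : 'I_n -> R[i]) (c : R) :
  cinner v (fun j => u j + (c%:C)%C * w j) = cinner v u + (c%:C)%C * cinner v w.
Proof.
rewrite /cinner mulr_sumr -big_split /=; apply: eq_bigr => j _.
rewrite conjD conjM conjc_real; ring.
Qed.

Lemma qI_cint (h : X -> R[i]) (b : 'I_n -> R[i]) F k : Linfty mu h -> L2 mu F ->
  cint (fun x => h x * cinner b (F x) * F x k).
Proof.
move=> hh hF; under eq_fun do rewrite -mulrA.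
apply: cint_bounded => //; apply: L2c_mul; first exact: cinner_L2c.
exact: L2_coord.
Qed.


Lemma qmap_comb (h : X -> R[i]) (b : 'I_n -> R[i]) F P F1 (c : R) :
  Linfty mu h -> L2 mu F -> L2 mu P -> L2 mu F1 ->
  (forall x k, F1 x k = F x k + P x k) ->
  qmap mu h b F = (fun=> 0) -> qmap mu h b P = (fun=> 0) ->
  qmap mu h b F1 = (fun=> 0) ->
  qmap mu h b (fun x k => F x k + (c%:C)%C * P x k) = fun=> 0.
Proof.
move=> hh hF hP hF1 e1 qF qP qF1; apply: funext => k.
have eF := congr1 (fun g : 'I_n -> R[i] => g k) qF; have eP := congr1 (fun g : 'I_n -> R[i] => g k) qP.
have eF1 := congr1 (fun g : 'I_n -> R[i] => g k) qF1; rewrite /qmap /= in eF eP eF1 *.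
set C := (c%:C)%C.
have pw : forall x, h x * cinner b (fun k => F x k + C * P x k) * (F x k + C * P x k) =
  (1 - C) * (h x * cinner b (F x) * F x k) + ((C ^+ 2 - C) * (h x * cinner b (P x) * P x k)
   + C * (h x * cinner b (F1 x) * F1 x k)).
  move=> x; rewrite cinner_comb e1.
  have -> : cinner b (F1 x) = cinner b (F x) + cinner b (P x).
    rewrite /cinner -big_split /=; apply: eq_bigr => j _.
    by rewrite e1 conjD mulrDr.
  ring.
under eq_fun do rewrite pw.
rewrite cintegral_add; last 2 first.
- by apply: cint_scale; exact: qI_cint.
- by apply: cint_add; apply: cint_scale; exact: qI_cint.
rewrite cintegral_add; last 2 first.
- by apply: cint_scale; exact: qI_cint.
- by apply: cint_scale; exact: qI_cint.
rewrite !cintegral_scale; try exact: qI_cint.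
by rewrite eF eP eF1 !mulr0 !addr0.
Qed.

Definition gram F G : 'M[R[i]]_n :=
  \matrix_(k, l) cintegral mu (fun x => (F x k)^*%C * G x l).

Lemma row_gram (v : 'I_n -> R[i]) F G : L2 mu F -> L2 mu G -> forall l,
  ((\row_k v k) *m gram F G) 0 l = cintegral mu (fun x => cinner v (F x) * G x l).
Proof.
move=> hF hG l; rewrite mxE /cinner.
under [in RHS]eq_fun do rewrite mulr_suml.
rewrite cintegral_sum; last first.
  move=> k; under eq_fun do rewrite -mulrA; apply: cint_scale.
  by apply: L2c_mul; [apply: L2c_conj|]; exact: L2_coord.
apply: eq_bigr => k _; rewrite !mxE.
under [in RHS]eq_fun do rewrite -mulrA.
rewrite cintegral_scale //.
by apply: L2c_mul; [apply: L2c_conj|]; exact: L2_coord.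
Qed.

Lemma gram_comb F P (c : R) : L2 mu F -> L2 mu P ->
  gram (fun x k => F x k + (c%:C)%C * P x k) P = gram F P + (c%:C)%C *: gram P P.
Proof.
move=> hF hP; apply/matrixP => k l; rewrite !mxE.
under eq_fun do rewrite conjD conjM conjc_real mulrDl -mulrA.
rewrite cintegral_add ?cintegral_scale //.
- by apply: L2c_mul; [apply: L2c_conj|]; exact: L2_coord.
- by apply: L2c_mul; [apply: L2c_conj|]; exact: L2_coord.
- by apply: cint_scale; apply: L2c_mul; [apply: L2c_conj|]; exact: L2_coord.
Qed.

Lemma frame_lower F P : L2 mu F -> L2 mu P -> gram F P \in unitmx ->
  exists A : R, 0 < A /\ forall v : 'I_n -> R[i],
    ((A * vsqnorm v)%:E <= \int[mu]_x (csqnorm (cinner v (F x)))%:E)%E.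
Proof.
move=> hF hP hU.
have [K [K0 hK]] := mx_bound _ (invmx (gram F P)).
set SP := \sum_(l < n) RI (fun x => csqnorm (P x l)).
have SP0 : 0 <= SP.
  by apply: sumr_ge0 => l _; apply: Rintegral_ge0 => x _; exact: csqnorm_ge0.
have D0 : 0 < 2 * K * SP + 1 by have := mulr_ge0 K0 SP0; lra.
exists (1 / (2 * K * SP + 1)); split; first by rewrite divr_gt0.
move=> v.
have hw : L2c (fun x => cinner v (F x)) := cinner_L2c v _ hF.
rewrite rint_EFin; last exact: L2c_rint.
rewrite lee_fin.
set Q := RI _.
have Q0 : 0 <= Q by apply: Rintegral_ge0 => x _; exact: csqnorm_ge0.
set u := (\row_k v k) *m gram F P.
have e1 : vsqnorm v = vsqnorm (fun l => (u *m invmx (gram F P)) 0 l).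
  by rewrite /u mulmxK //; congr vsqnorm; apply: funext => k; rewrite mxE.
have e2 : vsqnorm (fun k => u 0 k) <= 2 * Q * SP.
  rewrite /vsqnorm /SP mulr_sumr; apply: ler_sum => l _.
  rewrite /u row_gram //; apply: le_trans; first apply: cs_cint => //.
    exact: L2_coord.
  by rewrite mulrA.
have e3 : vsqnorm v <= K * (2 * Q * SP).
  rewrite e1; apply: le_trans; first exact: hK.
  by rewrite ler_wpM2l.
rewrite mul1r ler_pdivrMl //.
have : 0 <= K * SP * Q by rewrite !mulr_ge0.
nra.
Qed.


Lemma frame_upper F : L2 mu F -> forall v : 'I_n -> R[i],
  (\int[mu]_x (csqnorm (cinner v (F x)))%:E <=
    ((2 ^+ n * RI (fun x => vsqnorm (F x))) * vsqnorm v)%:E)%E.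
Proof.
move=> hF v.
have hw : L2c (fun x => cinner v (F x)) := cinner_L2c v _ hF.
rewrite rint_EFin; last exact: L2c_rint.
rewrite lee_fin.
have -> : 2 ^+ n * RI (fun x => vsqnorm (F x)) * vsqnorm v =
    RI (fun x => (2 ^+ n * vsqnorm v) * vsqnorm (F x)).
  by rewrite RintegralZl //; [ring | exact: L2_rint].
apply: le_Rintegral => //.
- exact: L2c_rint.
- by apply: rint_scale; exact: L2_rint.
- by move=> x _; rewrite -mulrA; exact: cinner_bound.
Qed.

Lemma csqnorm_eq0 (z : R[i]) : csqnorm z = 0 -> z = 0.
Proof.
case: z => a b; rewrite /csqnorm /= => h.
have ha := sqr_ge0 a; have hb := sqr_ge0 b.
have a0 : a ^+ 2 = 0 by lra.
have b0 : b ^+ 2 = 0 by lra.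
move/eqP: a0; rewrite sqrf_eq0 => /eqP ->.
by move/eqP: b0; rewrite sqrf_eq0 => /eqP ->.
Qed.

Lemma ReJ (z : R[i]) : cRe (z * z^*%C) = csqnorm z.
Proof. by rewrite ReM ReC ImC /csqnorm; ring. Qed.

Lemma gram_unit P (A : R) : L2 mu P -> 0 < A ->
  (forall v : 'I_n -> R[i],
    ((A * vsqnorm v)%:E <= \int[mu]_x (csqnorm (cinner v (P x)))%:E)%E) ->
  gram P P \in unitmx.
Proof.
move=> hP A0 hA; rewrite unitmxE unitfE; apply/negP => /det0P [r r0 hr].
pose v := fun k => r 0 k.
have rv : r = \row_k v k by apply/rowP => k; rewrite mxE.
have hw : L2c (fun x => cinner v (P x)) := cinner_L2c v _ hP.
have cw : cintegral mu (fun x => cinner v (P x) * (cinner v (P x))^*%C) = 0.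
  have -> : (fun x => cinner v (P x) * (cinner v (P x))^*%C) =
      (fun x => \sum_(l < n) (v l)^*%C * (cinner v (P x) * P x l)).
    apply: funext => x; set w := cinner v (P x).
    have -> : (w^*)%C = \sum_(k < n) (v k)^*%C * P x k.
      rewrite /w /cinner.
      elim/big_rec2: _ => [|k y1 y2 _ <-]; first by apply: ceqP'; rewrite ?ReC ?ImC //= oppr0.
      by rewrite conjD conjM /= conjcK.
    by rewrite mulr_sumr; apply: eq_bigr => l _; ring.
  rewrite cintegral_sum; last first.
    move=> l; apply: cint_scale; apply: L2c_mul => //; exact: L2_coord.
  apply: big1 => l _; rewrite cintegral_scale; last first.
    by apply: L2c_mul => //; exact: L2_coord.
  rewrite -row_gram // -rv hr mxE mulr0 //.
have Q0 : RI (fun x => csqnorm (cinner v (P x))) = 0.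
  have := congr1 (@complex.Re R) cw; rewrite /cintegral /=.
  by under eq_Rintegral do rewrite ReJ.
have := hA v; rewrite rint_EFin; last exact: L2c_rint.
rewrite Q0 lee_fin => hv.
have vs0 : vsqnorm v = 0.
  apply/eqP; rewrite eq_le vsqnorm_ge0 andbT.
  by rewrite -(pmulr_rle0 _ A0).
move/negP: r0; apply; apply/eqP/rowP => k; rewrite mxE; apply: csqnorm_eq0.
apply/eqP; rewrite eq_le csqnorm_ge0 andbT -vs0.
exact: csq_le_vsq.
Qed.

End Vec.
End Meas.


Theorem corollary6p6 (d : measure_display) (X : measurableType d) (R : realType)
  (mu : {measure set X -> \bar R}) (n : nat)
  (b : 'I_n -> R[i]) (h : X -> R[i]) (Phi : X -> 'I_n -> R[i]) :
  sigma_finite setT mu ->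
  (0 < n)%N ->
  b <> (fun=> 0) ->
  Linfty mu h ->
  qzero mu h b Phi ->
  cont_frame mu Phi ->
  forall G, S_Phi mu h b Phi G ->
  forall eps : R, 0 < eps ->
  exists H, cont_frame mu H /\ S_Phi mu h b Phi H /\
    (L2sqdist mu G H < (eps ^+ 2)%:E)%E.
Proof.
move=> _ _ _ hh [L2Phi qPhi] [_ [A0 [B0 [A0pos [_ hAB]]]]] G.
move=> [[L2G qG] [G0 [L2G0 qG0] eG]] eps eps0.
have e1 : forall x k, G0 x k = G x k + Phi x k.
  by move=> x k; rewrite eG subrK.
set N := Rintegral mu setT (fun x => vsqnorm (Phi x)).
have N0 : 0 <= N by apply: Rintegral_ge0 => x _; exact: vsqnorm_ge0.
set d0 := eps / (N + 1).
have d0p : 0 < d0 by rewrite divr_gt0 //; lra.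
set s := [seq d0 / (j.+1)%:R | j <- iota 0 n.+1].
have us : uniq s.
  rewrite map_inj_uniq ?iota_uniq // => a b' /= hab.
  have : ((a.+1)%:R : R)^-1 = ((b'.+1)%:R)^-1.
    by apply: (mulfI (lt0r_neq0 d0p)).
  by move/invr_inj/eqP; rewrite eqr_nat => /eqP [].
have ss : size s = n.+1 by rewrite size_map size_iota.
have hPu := gram_unit mu n Phi A0 L2Phi A0pos (fun v => proj1 (hAB v)).
have [t ts hu] := exists_good n (gram mu n G Phi) (gram mu n Phi Phi) s hPu us ss.
have [t0 td0] : 0 <= t /\ t <= d0.
  move: ts => /mapP [j _ ->]; split; first by rewrite divr_ge0 // ltW.
  rewrite ler_pdivrMr ?ltr0n //.
  by rewrite ler_peMr ?(ltW d0p) // ler1n.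
set H := fun x k => G x k + (t%:C)%C * Phi x k.
have L2H : L2 mu H by apply: L2_comb.
have hgu : gram mu n H Phi \in unitmx by rewrite /H gram_comb.
have [A [Apos hA]] := frame_lower mu n H Phi L2H L2Phi hgu.
exists H; split; [|split].
- split => //; exists A, (2 ^+ n * Rintegral mu setT (fun x => vsqnorm (H x)) + A).
  have I0 : 0 <= Rintegral mu setT (fun x => vsqnorm (H x)).
    by apply: Rintegral_ge0 => x _; exact: vsqnorm_ge0.
  have I1 : 0 <= 2 ^+ n * Rintegral mu setT (fun x => vsqnorm (H x)).
    by rewrite mulr_ge0 // exprn_ge0.
  split => //; split; first by lra.
  move=> v; split; first exact: hA.
  apply: (le_trans (frame_upper mu n H L2H v)); rewrite lee_fin.
  rewrite mulrDl lerDl; apply: mulr_ge0; [exact: ltW | exact: vsqnorm_ge0].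
- split.
  + split => //; exact: (qmap_comb mu n h b G Phi G0 t hh L2G L2Phi L2G0 e1 qG qPhi qG0).
  + exists (fun x k => G x k + ((1 + t)%:C)%C * Phi x k).
      split; first by apply: L2_comb.
      exact: (qmap_comb mu n h b G Phi G0 (1 + t) hh L2G L2Phi L2G0 e1 qG qPhi qG0).
    apply: funext => x; apply: funext => k; rewrite /H rmorphD rmorph1; ring.
- rewrite /L2sqdist.
  have pw : forall x, vsqnorm (fun k => G x k - H x k) = t ^+ 2 * vsqnorm (Phi x).
    move=> x; rewrite /vsqnorm mulr_sumr; apply: eq_bigr => k _.
    rewrite /H opprD addrA subrr add0r /csqnorm ReN ImN ReM ImM /=; ring.
  under eq_integral do rewrite pw.
  rewrite rint_EFin; last by apply: rint_scale; exact: L2_rint.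
  rewrite RintegralZl //; last exact: L2_rint.
  rewrite lte_fin -/N.
  have h1 : t ^+ 2 * N <= d0 ^+ 2 * N.
    by apply: ler_wpM2r => //; apply: lerXn2r => //; rewrite nnegrE ltW.
  apply: (le_lt_trans h1).
  have hN1 : N + 1 != 0 by rewrite lt0r_neq0 //; lra.
  have e : d0 * (N + 1) = eps by rewrite /d0 divfK.
  rewrite -e.
  have : 0 < d0 ^+ 2 by rewrite exprn_gt0.
  nra.
Qed.
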